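(* Let $A\in\mathbb{C}^{n\times n}$, $B\in\mathbb{C}^{n\times m}$, $C\in\mathbb{C}^{p\times n}$, and suppose $A^*Z_j=C^*h_j+Z_jH_{-j}$ with $Z_j\in\mathbb{C}^{n\times N}$, $h_j\in\mathbb{C}^{p\times N}$, $H_{-j}\in\mathbb{C}^{N\times N}$ such that $0=H_{-j}+H_{-j}^*-(Z_j^*BB^*Z_j+h_j^*h_j)$; put $R_j=C^*+Z_jh_j^*$ and $X_j=Z_jZ_j^*$. Let $\tilde Z\in\mathbb{C}^{n\times k}$, $U_1\in\mathbb{C}^{p\times k}$, $D\in\mathbb{C}^{k\times k}$, $U_2=h_j^*U_1$ satisfy $A^*\tilde Z=C^*U_1+Z_j(U_2+Z_j^*BB^*\tilde Z)+\tilde ZD$ (e.g. $\tilde Z=(A^*-X_jBB^*-\mu I_n)^{-1}R_j$, $U_1=I_p$, $D=\mu I_p$). Let $Y_{22}\in\mathbb{C}^{k\times k}$ be Hermitian positive definite with $0=Y_{22}D+D^*Y_{22}-\tilde Z^*BB^*\tilde Z-U_1^*U_1$ and Cholesky factorization $Y_{22}=G_{22}^*G_{22}$. Define $Z_{j+1}=\begin{bmatrix}Z_j&\tilde ZG_{22}^{-1}\end{bmatrix}$, $h_{j+1}=\begin{bmatrix}h_j&U_1G_{22}^{-1}\end{bmatrix}$, $H_{-(j+1)}=\begin{bmatrix}H_{-j}&(U_2+Z_j^*BB^*\tilde Z)G_{22}^{-1}\\0&G_{22}DG_{22}^{-1}\end{bmatrix}$. Then $A^*Z_{j+1}=C^*h_{j+1}+Z_{j+1}H_{-(j+1)}$,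 $0=H_{-(j+1)}+H_{-(j+1)}^*-(Z_{j+1}^*BB^*Z_{j+1}+h_{j+1}^*h_{j+1})$, and $R_{j+1}:=C^*+Z_{j+1}h_{j+1}^*=R_j+\tilde ZY_{22}^{-1}U_1^*$ satisfies $\mathcal{R}(Z_{j+1}Z_{j+1}^* )=R_{j+1}R_{j+1}^*$.
   Context: $\mathcal{R}(X)=A^*X+XA+C^*C-XBB^*X$ is the Riccati residual. The hypothesis on $(Z_j,h_j,H_{-j})$ states that the identity matrix solves the small Lyapunov equation $0=\tilde YH_{-j}+H_{-j}^*\tilde Y-(Z_j^*BB^*Z_j+h_j^*h_j)$. *)

(* Defs.v *)
(* Complex scalars: an arbitrary numClosedFieldType C
   (e.g. algC, or complex R for R : rcfType), with conjugation Num.conj. *)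
From HB Require Import structures.
From mathcomp Require Import all_boot all_order all_algebra.
Set Implicit Arguments. Unset Strict Implicit. Unset Printing Implicit Defensive.
Import Order.TTheory GRing.Theory Num.Theory.
Local Open Scope ring_scope.

Definition ctmx (F : numClosedFieldType) (m n : nat) (M : 'M[F]_(m, n)) : 'M[F]_(n, m) :=
  (map_mx Num.conj M)^T.

Definition riccati_res (F : numClosedFieldType) (n m p : nat)
  (A : 'M[F]_n) (B : 'M[F]_(n, m)) (C : 'M[F]_(p, n)) (X : 'M[F]_n) : 'M[F]_n :=
  ctmx A *m X + X *m A + ctmx C *m C - X *m B *m ctmx B *m X.

Definition hpd (F : numClosedFieldType) (k : nat) (Y : 'M[F]_k) : Prop :=
  ctmx Y = Y /\
  forall v : 'cV[F]_k, v != 0 -> 0 < (ctmx v *m Y *m v) ord0 ord0.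

(* G is the Cholesky factor of Y : Y = G^* G, G upper triangular with
   positive (real) diagonal entries *)
Definition cholesky_factor (F : numClosedFieldType) (k : nat) (Y G : 'M[F]_k) : Prop :=
  [/\ Y = ctmx G *m G, is_trig_mx G^T & forall i, 0 < G i i].

(* Main.v *)
Require Import Defs.
From HB Require Import structures.
From mathcomp Require Import all_boot all_order all_algebra.
Import Order.TTheory GRing.Theory Num.Theory.
Local Open Scope ring_scope.
Section S.
Variable F : numClosedFieldType.
Lemma ctmxM m n p (A : 'M[F]_(m,n)) (B : 'M[F]_(n,p)) : ctmx (A *m B) = ctmx B *m ctmx A.
Proof. by rewrite /ctmx map_mxM trmx_mul. Qed.
Lemma ctmxK m n (A : 'M[F]_(m,n)) : ctmx (ctmx A) = A.
Proof. by apply/matrixP=> i j; rewrite !mxE conjCK. Qed.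
Lemma ctmxD m n (A B : 'M[F]_(m,n)) : ctmx (A + B) = ctmx A + ctmx B.
Proof. by rewrite /ctmx map_mxD linearD. Qed.
Lemma ctmxN m n (A : 'M[F]_(m,n)) : ctmx (- A) = - ctmx A.
Proof. by rewrite /ctmx map_mxN linearN. Qed.
Lemma ctmx1 m : ctmx (1%:M : 'M[F]_m) = 1%:M.
Proof. by rewrite /ctmx map_mx1 trmx1. Qed.
Lemma ctmx0 m n : ctmx (0 : 'M[F]_(m,n)) = 0.
Proof. by rewrite /ctmx map_mx0 trmx0. Qed.
Lemma ctmx_row m n1 n2 (A : 'M[F]_(m,n1)) (B : 'M[F]_(m,n2)) : ctmx (row_mx A B) = col_mx (ctmx A) (ctmx B).
Proof. by rewrite /ctmx map_row_mx tr_row_mx. Qed.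
Lemma ctmx_block m1 m2 n1 n2 (a : 'M[F]_(m1,n1)) (b : 'M[F]_(m1,n2)) c (d : 'M[F]_(m2,n2)) :
  ctmx (block_mx a b c d) = block_mx (ctmx a) (ctmx c) (ctmx b) (ctmx d).
Proof. by rewrite /ctmx map_block_mx tr_block_mx. Qed.
Lemma chol_unit k (Y G : 'M[F]_k) : cholesky_factor Y G -> G \in unitmx.
Proof.
case=> _ tr pos; rewrite unitmxE -det_tr det_trig // unitfE.
rewrite (eq_bigr (fun i => G i i)); last by move=> i _; rewrite mxE.
by rewrite prodf_seq_neq0; apply/allP=> i _; rewrite /= lt0r_neq0.
Qed.
Lemma zaux (V : zmodType) (a b c d e f : V) : a + b + (c + (d + e + - b)) + f - d = f + a + (c + e).
Proof.
rewrite !addrA -(addrAC _ (-b)) -(addrAC _ (-b)) -(addrAC _ (-b)) -(addrAC _ (-b)) subrK.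
by rewrite (addrAC _ d) (addrAC _ d) addrK addrC !addrA.
Qed.

Lemma ric_lemma (n m p N : nat) (A : 'M[F]_n) (B : 'M[F]_(n, m)) (C : 'M[F]_(p, n))
  (Z : 'M[F]_(n, N)) (h : 'M[F]_(p, N)) (H : 'M[F]_N) :
  ctmx A *m Z = ctmx C *m h + Z *m H ->
  0 = H + ctmx H - (ctmx Z *m B *m ctmx B *m Z + ctmx h *m h) ->
  riccati_res A B C (Z *m ctmx Z) = (ctmx C + Z *m ctmx h) *m ctmx (ctmx C + Z *m ctmx h).
Proof.
move=> e1 e2.
have eH : ctmx H = ctmx Z *m B *m ctmx B *m Z + ctmx h *m h - H.
  by move/eqP: e2; rewrite eq_sym subr_eq0 => /eqP <-; rewrite [H + _]addrC addrK.
have e3 : Z *m ctmx Z *m A = Z *m (ctmx h *m C + ctmx H *m ctmx Z).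
  by rewrite -mulmxA; congr (_ *m _); rewrite -[A]ctmxK -ctmxM e1 ctmxD !ctmxM !ctmxK.
rewrite /riccati_res e3 mulmxA e1 eH.
rewrite !ctmxD !ctmxM !ctmxK.
rewrite !(mulmxDl, mulmxDr, mulmxBl, mulmxBr) !mulmxA.
by rewrite mulmxN mulNmx zaux.
Qed.
End S.

Theorem mainTheorem11 (F : numClosedFieldType) (n m p N k : nat)
  (A : 'M[F]_n) (B : 'M[F]_(n, m)) (C : 'M[F]_(p, n))
  (Zj : 'M[F]_(n, N)) (hj : 'M[F]_(p, N)) (Hj : 'M[F]_N)
  (Zt : 'M[F]_(n, k)) (U1 : 'M[F]_(p, k)) (D : 'M[F]_k)
  (Y22 G22 : 'M[F]_k) :
  ctmx A *m Zj = ctmx C *m hj + Zj *m Hj ->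
  0 = Hj + ctmx Hj - (ctmx Zj *m B *m ctmx B *m Zj + ctmx hj *m hj) ->
  let Rj := ctmx C + Zj *m ctmx hj in
  let U2 := ctmx hj *m U1 in
  ctmx A *m Zt = ctmx C *m U1 + Zj *m (U2 + ctmx Zj *m B *m ctmx B *m Zt) + Zt *m D ->
  hpd Y22 ->
  0 = Y22 *m D + ctmx D *m Y22 - ctmx Zt *m B *m ctmx B *m Zt - ctmx U1 *m U1 ->
  cholesky_factor Y22 G22 ->
  let Zj1 : 'M[F]_(n, N + k) := row_mx Zj (Zt *m invmx G22) in
  let hj1 : 'M[F]_(p, N + k) := row_mx hj (U1 *m invmx G22) in
  let Hj1 : 'M[F]_(N + k) :=
    block_mx Hj ((U2 + ctmx Zj *m B *m ctmx B *m Zt) *m invmx G22)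
             0 (G22 *m D *m invmx G22) in
  let Rj1 := ctmx C + Zj1 *m ctmx hj1 in
  [/\ ctmx A *m Zj1 = ctmx C *m hj1 + Zj1 *m Hj1,
      0 = Hj1 + ctmx Hj1 - (ctmx Zj1 *m B *m ctmx B *m Zj1 + ctmx hj1 *m hj1),
      Rj1 = Rj + Zt *m invmx Y22 *m ctmx U1
    & riccati_res A B C (Zj1 *m ctmx Zj1) = Rj1 *m ctmx Rj1].
Proof.
move=> e1 e2 Rj U2 e3 hY e4 ch Zj1 hj1 Hj1 Rj1.
have Gu := @chol_unit F k Y22 G22 ch.
case: ch => eY _ _.
have GGi : G22 *m invmx G22 = 1%:M by rewrite mulmxV.
have GiG : invmx G22 *m G22 = 1%:M by rewrite mulVmx.
have c1 : ctmx A *m Zj1 = ctmx C *m hj1 + Zj1 *m Hj1.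
  rewrite /Zj1 /hj1 /Hj1 mul_mx_row mul_row_block mul_mx_row add_row_mx.
  rewrite mulmx0 addr0 e1; congr row_mx.
  rewrite mulmxA e3 !mulmxDl !mulmxDr !mulmxA -[Zt *m invmx G22 *m G22]mulmxA GiG mulmx1 -!addrA.
  by rewrite mulmxDl -!addrA.
have c2 : 0 = Hj1 + ctmx Hj1 - (ctmx Zj1 *m B *m ctmx B *m Zj1 + ctmx hj1 *m hj1).
  rewrite /Hj1 /Zj1 /hj1 ctmx_block !ctmx_row mul_col_mx mul_col_mx mul_col_row mul_col_row.
  rewrite add_block_mx add_block_mx opp_block_mx add_block_mx -block_mx0.
  congr block_mx.
  - exact: e2.
  - by rewrite ctmx0 addr0 /U2 !mulmxA -mulmxDl [ctmx Zj *m _ *m _ *m _ + _]addrC subrr.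
  - rewrite add0r /U2 !ctmxM !ctmxD !ctmxM !ctmxK !mulmxDr !mulmxA.
    by rewrite [X in _ - X]addrC subrr.
  have h1 : ctmx (invmx G22) *m ctmx G22 = 1%:M by rewrite -ctmxM GGi ctmx1.
  have E := congr1 (fun M => ctmx (invmx G22) *m M *m invmx G22) e4.
  rewrite /= mulmx0 mul0mx in E; rewrite E eY.
  rewrite !(mulmxDr, mulmxBr, mulmxDl, mulmxBl) !ctmxM ?ctmxK !mulmxA h1 mul1mx.
  rewrite -(mulmxA _ G22 (invmx G22)) GGi mulmx1.
  by rewrite !mulmxN !mulNmx !mulmxA opprD addrA.
split => //.
  have YX : Y22 *m (invmx G22 *m ctmx (invmx G22)) = 1%:M.
    by rewrite eY mulmxA -(mulmxA _ G22) GGi mulmx1 -ctmxM GiG ctmx1.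
  have [Yu _] := mulmx1_unit YX.
  have iY : invmx Y22 = invmx G22 *m ctmx (invmx G22).
    by rewrite -[RHS](mulKmx Yu) YX mulmx1.
  by rewrite /Rj1 /Zj1 /hj1 ctmx_row mul_row_col addrA iY ctmxM !mulmxA.
exact: (@ric_lemma F n m p (N + k) A B C Zj1 hj1 Hj1 c1 c2).
Qed.
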